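(* Let $v,k$ be positive integers with $k\mid v$ and $v\mid k^2$, and let $\lambda=k^2/v$. Let $X=(x_t)_{t=0}^{v-1}$ be the binary sequence with $x_t=1$ for $0\le t\le k-1$ and $x_t=0$ for $k\le t\le v-1$. Let $Y=(y_t)_{t=0}^{v-1}$ be any binary sequence such that $y_{t+k}=y_t$ for all $t$ (indices modulo $v$) and $y_0y_1\dots y_{k-1}$ has weight $\lambda$. Then the subsets $A_X=\{t: x_t=1\}$ and $A_Y=\{t:y_t=1\}$ of $\mathbb{Z}_v$ form a $(v,2,k,\lambda)$-PSEDF in $\mathbb{Z}_v$ and a non-disjoint $(v,2,k,\lambda)$-SEDF in $\mathbb{Z}_v$.
   Context: A binary sequence $(x_t)_{t=0}^{v-1}$ corresponds to the subset $\{t\in\mathbb{Z}_v: x_t=1\}$ of $\mathbb{Z}_v$; its weight is the number of ones. For subsets $A,B$ of a group $G$, $\Delta(A,B)$ is the multiset $\{a-b:a\in A,b\in B\}$ and $\lambda G$ is the multiset with each element of $G$ exactly $\lambda$ times. For $G$ of order $v$ and $m>1$, a family of $k$-subsets $\{A_1,\dots,A_m\}$ of $G$ is a $(v,m,k,\lambda)$-PSEDF if $\Delta(A_i,A_j)=\lambda G$ for every $i\neq j$; it is a non-disjoint $(v,m,k,\lambda)$-SEDF if for each $i$ the multiset union $\bigcup_{j\neq i}\Delta(A_i,A_j)$ equals $\lambda G$. The sets need not be disjoint. *)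

(* Defs.v *)
(* Z_v is modelled as 'I_v with arithmetic mod v
   (avoids the 'Z_1 = 'Z_2 pitfall of 'Z_v). *)
From mathcomp Require Import all_boot.
Unset Printing Implicit Defensive.

Definition subZ (v : nat) (a b : 'I_v) : nat := (a + v - b) %% v.

(* multiplicity of g in the multiset Delta(A,B) = {a - b : a in A, b in B} *)
Definition diff_mult (v : nat) (A B : {set 'I_v}) (g : 'I_v) : nat :=
  #|[set p : 'I_v * 'I_v | [&& p.1 \in A, p.2 \in B & subZ v p.1 p.2 == g]]|.

Definition is_PSEDF (v m k lam : nat) (A : 'I_m -> {set 'I_v}) : Prop :=
  1 < m /\ (forall i, #|A i| = k) /\
  (forall i j : 'I_m, i != j -> forall g : 'I_v, diff_mult v (A i) (A j) g = lam).

Definition is_SEDF (v m k lam : nat) (A : 'I_m -> {set 'I_v}) : Prop :=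
  1 < m /\ (forall i, #|A i| = k) /\
  (forall (i : 'I_m) (g : 'I_v),
      \sum_(j < m | j != i) diff_mult v (A i) (A j) g = lam).

Definition support_set (v : nat) (x : nat -> bool) : {set 'I_v} :=
  [set t : 'I_v | x t].

Definition pair_family (v : nat) (A B : {set 'I_v}) : 'I_2 -> {set 'I_v} :=
  fun i => if val i == 0 then A else B.

(* Main.v *)
Require Import Defs.
From mathcomp Require Import all_boot zify.

Lemma mod2v v x : x < v + v -> x %% v = if x < v then x else x - v.
Proof.
move=> h2; case: (ltnP x v) => h1; first exact: modn_small.
have -> : x = (x - v) + v by rewrite subnK.
by rewrite modnDr modn_small ?addnK //; lia.
Qed.

Lemma subZ_eq1 v (a b g : 'I_v) :
  (subZ v a b == g) = (val b == (a + v - g) %% v).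
Proof.
rewrite /subZ; case: a b g => [a ha] [b hb] [g hg] /=.
rewrite !mod2v; try lia.
apply/eqP/eqP; case: ifP; case: ifP => /idP h1 /idP h2 H; lia.
Qed.

Lemma subZ_eq2 v (a b g : 'I_v) :
  (subZ v a b == g) = (val a == (b + g) %% v).
Proof.
rewrite /subZ; case: a b g => [a ha] [b hb] [g hg] /=.
rewrite !mod2v; try lia.
apply/eqP/eqP; case: ifP; case: ifP => /idP h1 /idP h2 H; lia.
Qed.

Lemma sum_pick v (F : 'I_v -> nat) (c0 : 'I_v) :
  (forall b, b != c0 -> F b = 0) -> \sum_b F b = F c0.
Proof. by move=> H; rewrite (bigD1 c0) //= big1 ?addn0 // => b /H. Qed.

Lemma window v k (y : nat -> bool) : 0 < v ->
  (forall t, t < v -> y ((t + k) %% v) = y t) ->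
  forall s, \sum_(s <= i < s + k) (y (i %% v) : nat) = \sum_(0 <= i < k) (y (i %% v) : nat).
Proof.
move=> v0 hp; elim=> [|s IH] //.
rewrite -IH.
have per : y ((s + k) %% v) = y (s %% v).
  by rewrite -modnDml hp // ltn_mod.
have e1 := @big_ltn _ 0 addn s (s + k).+1 (fun i => (y (i %% v) : nat)) (leq_addr _ _).
have e2 := @big_nat_recr _ 0 addn (s + k) s (fun i => (y (i %% v) : nat)) (leq_addr _ _).
rewrite e1 per addnC in e2.
rewrite addSn; apply/eqP; rewrite -(eqn_add2r (y (s %% v))); apply/eqP; exact: e2.
Qed.

Lemma blocks v k (y : nat -> bool) : 0 < v ->
  (forall t, t < v -> y ((t + k) %% v) = y t) ->
  forall n, \sum_(0 <= t < n * k) (y (t %% v) : nat) = n * \sum_(0 <= i < k) (y (i %% v) : nat).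
Proof.
move=> v0 hp; elim=> [|n IH]; first by rewrite mul0n big_geq.
rewrite mulSnr (@big_cat_nat _ _ _ (n * k)) ?leq_addr //= IH.
by rewrite (window _ _ _ v0 hp (n * k)) mulSnr.
Qed.

Lemma card_support v x : #|support_set v x| = \sum_(t < v) (x t : nat).
Proof.
rewrite -sum1_card big_mkcond /=; apply: eq_bigr => t _.
by rewrite /support_set inE; case: (x t).
Qed.

Lemma sumX v k (F : nat -> nat) : k <= v ->
  \sum_(a < v) (if a < k then F a else 0) = \sum_(0 <= a < k) F a.
Proof.
move=> kv; rewrite -(big_mkord xpredT (fun a => if a < k then F a else 0)).
rewrite (@big_cat_nat _ _ _ k 0 v) //=.
rewrite [X in _ + X](@eq_big_nat _ _ _ k v _ (fun _ => 0)); last first.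
  by move=> a /andP[ha _]; rewrite ltnNge ha.
rewrite big1_eq addn0; apply: eq_big_nat => a /andP[_ ->] //.
Qed.

Lemma sum_pair v (F : 'I_v * 'I_v -> nat) :
  \sum_p F p = \sum_(a : 'I_v) \sum_(b : 'I_v) F (a, b).
Proof. by rewrite pair_big; apply: eq_bigr; case. Qed.

Lemma diffXY v k (y : nat -> bool) (g : 'I_v) : 0 < v -> k <= v ->
  (forall t, t < v -> y ((t + k) %% v) = y t) ->
  diff_mult v (support_set v (fun t => t < k)) (support_set v y) g
  = \sum_(0 <= i < k) (y (i %% v) : nat).
Proof.
move=> v0 kv hp; rewrite /diff_mult -sum1_card big_mkcond /=.
rewrite sum_pair.
have hg := ltn_ord g.
transitivity (\sum_(a < v) (if a < k then (y (((v - g) + a) %% v) : nat) else 0)).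
  apply: eq_bigr => a _.
  rewrite (@sum_pick v _ (Ordinal (ltn_pmod (a + v - g) v0))).
    rewrite inE /= /support_set !inE subZ_eq1 /= eqxx andbT.
    have -> : a + v - g = v - g + a by lia.
    by case: (a < k); case: (y _).
  move=> b hb; rewrite inE /= subZ_eq1.
  have -> : (val b == (a + v - g) %% v) = false.
    apply/negbTE; apply: contra hb => /eqP e; apply/eqP/val_inj => //.
  by rewrite !andbF.
rewrite (@sumX v k (fun a => (y ((v - g + a) %% v) : nat)) kv).
rewrite -(window _ _ _ v0 hp (v - g)).
have := @big_addn nat 0 addn 0 (v - g + k) (v - g) xpredT (fun i => (y (i %% v) : nat)).
rewrite add0n addKn => ->.
by apply: eq_big_nat => i _; rewrite addnC.
Qed.

Lemma diffYX v k (y : nat -> bool) (g : 'I_v) : 0 < v -> k <= v ->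
  (forall t, t < v -> y ((t + k) %% v) = y t) ->
  diff_mult v (support_set v y) (support_set v (fun t => t < k)) g
  = \sum_(0 <= i < k) (y (i %% v) : nat).
Proof.
move=> v0 kv hp; rewrite /diff_mult -sum1_card big_mkcond /= sum_pair exchange_big /=.
transitivity (\sum_(b < v) (if b < k then (y ((g + b) %% v) : nat) else 0)).
  apply: eq_bigr => b _.
  rewrite (@sum_pick v _ (Ordinal (ltn_pmod (b + g) v0))).
    rewrite inE /= /support_set !inE subZ_eq2 /= eqxx andbT addnC.
    by case: (b < k); case: (y _).
  move=> a ha; rewrite inE /= subZ_eq2.
  have -> : (val a == (b + g) %% v) = false.
    apply/negbTE; apply: contra ha => /eqP e; apply/eqP/val_inj => //.
  by rewrite !andbF.
rewrite (@sumX v k (fun a => (y ((g + a) %% v) : nat)) kv).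
rewrite -(window _ _ _ v0 hp g).
have := @big_addn nat 0 addn 0 (g + k) g xpredT (fun i => (y (i %% v) : nat)).
rewrite add0n addKn => ->.
by apply: eq_big_nat => i _; rewrite addnC.
Qed.

Lemma cardX v k : k <= v -> #|support_set v (fun t => t < k)| = k.
Proof.
move=> kv; rewrite card_support.
have := @sumX v k (fun _ => 1) kv.
have -> : \sum_(a < v) (if a < k then 1 else 0) = \sum_(a < v) ((a < k) : nat) by [].
move=> ->; by rewrite sum_nat_const_nat subn0 muln1.
Qed.

Lemma cardY v k (y : nat -> bool) : 0 < v -> 0 < k -> k %| v -> v %| k ^ 2 ->
  (forall t, t < v -> y ((t + k) %% v) = y t) ->
  \sum_(t < k) (y t : nat) = k ^ 2 %/ v ->
  #|support_set v y| = k.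
Proof.
move=> v0 k0 kv vk hp hs.
have kle : k <= v by apply: dvdn_leq.
have W0 : \sum_(0 <= i < k) (y (i %% v) : nat) = k ^ 2 %/ v.
  rewrite -hs big_mkord; apply: eq_bigr => i _; rewrite modn_small //.
  exact: leq_trans (ltn_ord i) kle.
rewrite card_support.
transitivity (\sum_(0 <= t < v) (y (t %% v) : nat)).
  by rewrite big_mkord; apply: eq_bigr => i _; rewrite modn_small.
have ev : v = v %/ k * k by rewrite divnK.
rewrite {1}ev blocks // W0.
have e2 : k ^ 2 = k ^ 2 %/ v * v by rewrite divnK.
move: e2 ev; rewrite expnS expn1.
move: (k ^ 2 %/ v) (v %/ k) => l n e2 ev.
apply/eqP; rewrite -(eqn_pmul2r k0); apply/eqP.
by rewrite e2 ev mulnA [n * l]mulnC.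

Qed.

Theorem theorem3p4 (v k : nat) (y : nat -> bool) :
  0 < v -> 0 < k -> k %| v -> v %| k ^ 2 ->
  (forall t, t < v -> y ((t + k) %% v) = y t) ->
  \sum_(t < k) (y t : nat) = k ^ 2 %/ v ->
  let x := fun t : nat => t < k in
  let A := pair_family v (support_set v x) (support_set v y) in
  is_PSEDF v 2 k (k ^ 2 %/ v) A /\ is_SEDF v 2 k (k ^ 2 %/ v) A.
Proof.
move=> v0 k0 kv vk hp hs x A.
have kle : k <= v by apply: dvdn_leq.
have W0 : \sum_(0 <= i < k) (y (i %% v) : nat) = k ^ 2 %/ v.
  rewrite -hs big_mkord; apply: eq_bigr => i _; rewrite modn_small //.
  exact: leq_trans (ltn_ord i) kle.
have cA : forall i, #|A i| = k.
  move=> i; rewrite /A /pair_family; case: ifP => _.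
    exact: cardX.
  exact: cardY.
have d01 : forall g, diff_mult v (A ord0) (A (lift ord0 ord0)) g = k ^ 2 %/ v.
  by move=> g; rewrite /A /pair_family /= diffXY.
have d10 : forall g, diff_mult v (A (lift ord0 ord0)) (A ord0) g = k ^ 2 %/ v.
  by move=> g; rewrite /A /pair_family /= diffYX.
split; split=> //; split=> //.
  move=> [[|[|i]] hi] //; move=> [[|[|j]] hj] // hij g.
move=> i g; rewrite big_mkcond !big_ord_recl big_ord0 /=.
case: i => [[|[|i]] hi] //=.
- by rewrite add0n addn0; exact: d01 g.
- by rewrite !addn0; exact: d10 g.
Qed.
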